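(* Let $L=\{<,\ldots\}$ be a countable first order language containing a binary relation symbol $<$, and let $T$ be a complete $L$-theory with Skolem functions in which $<$ is interpreted as a linear order. Suppose $T$ satisfies the regularity scheme. Let $M\models T$, let $\varphi(\bar{x},\bar{t})$ be an $L$-formula with $\bar{x}=(x_1,\ldots,x_n)$, and let $\bar{b}\in M$ with $|\bar{b}|=|\bar{t}|$ be such that $\varphi(\bar{x},\bar{b})$ is $\bar{x}$-unbounded in $M$. Let $\tau(\bar{u},\bar{s})$ be an $L$-term with $|\bar{u}|<n$, and let $a\in M$. Then $\varphi(\bar{x},\bar{b})\wedge B_{\tau}(\bar{x};a)$ is $\bar{x}$-unbounded in $M$.
   Context: ''$T$ has Skolem functions'' means that for every formula $\theta(y,\bar{x})$ there is a term $\tau(\bar{x})$ of $L$ with $T\models \forall\bar{x}(\exists y\,\theta(y,\bar{x})\to\theta(\tau(\bar{x}),\bar{x}))$. Tuple inequalities such as $\bar{s}<a$ mean every coordinate is $<a$. For $\bar{x}=(x_1,\ldots,x_n)$ and a formula $\chi(\bar{x})$ with parameters from a model $M$, $\chi(\bar{x})$ is $\bar{x}$-unbounded in $M$ if $M\models(\forall\alpha_1)(\exists x_1>\alpha_1)\cdots(\forall\alpha_n)(\exists x_n>\alpha_n)\chi(\bar{x})$; otherwise it is $\bar{x}$-bounded. $T$ satisfies the regularity scheme if for every $L$-formula $\varphi(\bar{x},\bar{y},\bar{t})$ (with $\bar{x}$ of any finite length), every model $M\models T$, every $y_0\in M$ and every $\bar{b}\in M$: if $(\exists\bar{y}<y_0)\varphi(\bar{x},\bar{y},\bar{b})$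 is $\bar{x}$-unbounded in $M$, then for some $\bar{y}_1<y_0$ in $M$, $\varphi(\bar{x},\bar{y}_1,\bar{b})$ is $\bar{x}$-unbounded in $M$. For a term $\tau(\bar{u},\bar{s})$ with $k=|\bar{u}|<n$, for integers $0<i_1<\cdots<i_{k+1}\leq n$ and an element $a$, let $A_{\tau}(x_{i_1},\ldots,x_{i_{k+1}};a)$ be the formula $(\forall\bar{s}<a)[\tau(x_{i_1},\ldots,x_{i_k},\bar{s})<x_{i_{k+1}}]$, and let $B_{\tau}(x_1,\ldots,x_n;a)$ be the conjunction of $A_{\tau}(x_{i_1},\ldots,x_{i_{k+1}};a)$ over all $0<i_1<\cdots<i_{k+1}\leq n$. *)

(* Defs.v *)
From Stdlib Require Import List Arith Fin.
Import ListNotations.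
Set Implicit Arguments.

Record signature := {
  Fsym : nat -> Type;
  Rsym : nat -> Type;
  ltsym : Rsym 2
}.

Definition countable_sig (L : signature) : Prop :=
  (exists f : {n : nat & Fsym L n} -> nat, forall u v, f u = f v -> u = v) /\
  (exists g : {n : nat & Rsym L n} -> nat, forall u v, g u = g v -> u = v).

Section Syntax.
Variable L : signature.

Inductive term : Type :=
| var : nat -> term
| app : forall n, Fsym L n -> (Fin.t n -> term) -> term.

Inductive formula : Type :=
| f_eq : term -> term -> formula
| f_rel : forall n, Rsym L n -> (Fin.t n -> term) -> formula
| f_false : formula
| f_not : formula -> formula
| f_and : formula -> formula -> formula
| f_or : formula -> formula -> formula
| f_imp : formula -> formula -> formula
| f_ex : formula -> formula
| f_all : formula -> formula.

Fixpoint bounded_t (k : nat) (t : term) : Prop :=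
  match t with
  | var i => i < k
  | @app _ _ args => forall j, bounded_t k (args j)
  end.

Fixpoint bounded_f (k : nat) (p : formula) : Prop :=
  match p with
  | f_eq t1 t2 => bounded_t k t1 /\ bounded_t k t2
  | @f_rel _ _ args => forall j, bounded_t k (args j)
  | f_false => True
  | f_not q => bounded_f k q
  | f_and q r | f_or q r | f_imp q r => bounded_f k q /\ bounded_f k r
  | f_ex q | f_all q => bounded_f (S k) q
  end.

Definition sentence (p : formula) : Prop := bounded_f 0 p.
End Syntax.

Arguments var {L} _.
Arguments app {L n} _ _.
Arguments f_eq {L} _ _.
Arguments f_rel {L n} _ _.
Arguments f_false {L}.
Arguments f_not {L} _.
Arguments f_and {L} _ _.
Arguments f_or {L} _ _.
Arguments f_imp {L} _ _.
Arguments f_ex {L} _.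
Arguments f_all {L} _.

Record structure (L : signature) := {
  dom :> Type;
  dom_inh : dom;
  ifun : forall n, Fsym L n -> (Fin.t n -> dom) -> dom;
  irel : forall n, Rsym L n -> (Fin.t n -> dom) -> Prop
}.

Section Semantics.
Variable L : signature.
Variable M : structure L.

Definition scons (x : M) (e : nat -> M) : nat -> M :=
  fun i => match i with 0 => x | S j => e j end.

Fixpoint eval_t (e : nat -> M) (t : term L) : M :=
  match t with
  | var i => e i
  | @app _ n f args => @ifun L M n f (fun j => eval_t e (args j))
  end.

Fixpoint sat (e : nat -> M) (p : formula L) : Prop :=
  match p with
  | f_eq t1 t2 => eval_t e t1 = eval_t e t2
  | @f_rel _ n r args => @irel L M n r (fun j => eval_t e (args j))
  | f_false => False
  | f_not q => ~ sat e q
  | f_and q r => sat e q /\ sat e r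
  | f_or q r => sat e q \/ sat e r
  | f_imp q r => sat e q -> sat e r
  | f_ex q => exists x : M, sat (scons x e) q
  | f_all q => forall x : M, sat (scons x e) q
  end.

(* environment given by a finite tuple: variable i |-> i-th entry
   (entries beyond the tuple get a fixed default; irrelevant for formulas
   bounded by the tuple length) *)
Definition envl (l : list M) : nat -> M := fun i => nth i l (dom_inh M).

Definition vec2 (a b : M) : Fin.t 2 -> M :=
  fun i => match i with Fin.F1 => a | _ => b end.

Definition ltM (a b : M) : Prop := @irel L M 2 (ltsym L) (vec2 a b).

Definition strict_linear_order : Prop :=
  (forall a, ~ ltM a a) /\
  (forall a b c, ltM a b -> ltM b c -> ltM a c) /\
  (forall a b, ltM a b \/ a = b \/ ltM b a).

Fixpoint unbounded (n : nat) (P : list M -> Prop) : Prop :=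
  match n with
  | 0 => P nil
  | S n' => forall a : M, exists x : M, ltM a x /\ unbounded n' (fun xs => P (x :: xs))
  end.

Definition all_lt (l : list M) (a : M) : Prop := Forall (fun s => ltM s a) l.

(* B_tau(x1..xn; a), for a term tau(u1..uk, s1..sl) (variables 0..k-1 are u,
   k..k+l-1 are s): for all 0-based indices i_0 < ... < i_k < n and all
   s-tuples below a, tau(x_{i_0},...,x_{i_{k-1}}, s) < x_{i_k}. *)
Definition B_tau (k l : nat) (tau : term L) (a : M) (xs : list M) : Prop :=
  forall idx : nat -> nat,
    (forall j, j < k -> idx j < idx (S j)) -> idx k < length xs ->
    forall ss : list M, length ss = l -> all_lt ss a ->
      ltM (eval_t (envl (map (fun j => nth (idx j) xs (dom_inh M)) (seq 0 k) ++ ss)) tau)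
          (nth (idx k) xs (dom_inh M)).
End Semantics.

Arguments ltM {L M} _ _.
Arguments unbounded {L M} _ _.
Arguments envl {L M} _ _.
Arguments all_lt {L M} _ _.
Arguments scons {L M} _ _ _.
Arguments eval_t {L M} _ _.

Definition theory (L : signature) := formula L -> Prop.

Definition models (L : signature) (M : structure L) (T : theory L) : Prop :=
  forall p, T p -> forall e : nat -> M, sat M e p.

Definition is_theory (L : signature) (T : theory L) : Prop :=
  forall p, T p -> sentence p.

Definition complete (L : signature) (T : theory L) : Prop :=
  (exists M : structure L, models M T) /\
  forall p, sentence p ->
    (forall M : structure L, models M T -> forall e, sat M e p) \/
    (forall M : structure L, models M T -> forall e, ~ sat M e p).

(* Skolem functions: for every theta(y, x) (variable 0 is y, the other free
   variables are x), a term tau(x) with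
   T |= forall x (exists y theta(y,x) -> theta(tau(x),x)). *)
Definition has_skolem (L : signature) (T : theory L) : Prop :=
  forall theta : formula L, exists tau : term L,
    forall M : structure L, models M T ->
      forall e : nat -> M,
        (exists y : M, sat M (scons y e) theta) ->
        sat M (scons (eval_t e tau) e) theta.

Definition lt_linear (L : signature) (T : theory L) : Prop :=
  forall M : structure L, models M T -> strict_linear_order M.

(* Regularity scheme: formula phi(x, y, t) with |x| = n, |y| = m, |t| = k
   (variables 0..n-1 = x, n..n+m-1 = y, n+m..n+m+k-1 = t). *)
Definition regularity (L : signature) (T : theory L) : Prop :=
  forall (n m k : nat) (phi : formula L), bounded_f (n + m + k) phi ->
  forall M : structure L, models M T ->
  forall (y0 : M) (b : list M), length b = k ->
    unbounded n (fun xs => exists ys : list M,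
        length ys = m /\ all_lt ys y0 /\ sat M (envl (xs ++ ys ++ b)) phi) ->
    exists ys : list M, length ys = m /\ all_lt ys y0 /\
      unbounded n (fun xs => sat M (envl (xs ++ ys ++ b)) phi).

(* Main.v *)
Require Import Defs.
From Stdlib Require Import List Arith Lia Classical FunctionalExtensionality.
Import ListNotations.

Fixpoint rename {L} (rho : nat -> nat) (t : term L) : term L :=
  match t with
  | var i => var (rho i)
  | @Defs.app _ n f args => Defs.app f (fun j => rename rho (args j))
  end.

Lemma eval_rename L (M : structure L) rho (t : term L) (e : nat -> M) :
  eval_t e (rename rho t) = eval_t (fun i => e (rho i)) t.
Proof.
  induction t; simpl; auto. f_equal. apply functional_extensionality; auto.
Qed.

Lemma eval_ext L (M : structure L) K (t : term L) (e1 e2 : nat -> M) :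
  bounded_t K t -> (forall i, i < K -> e1 i = e2 i) -> eval_t e1 t = eval_t e2 t.
Proof.
  induction t; simpl; intros.
  - apply H0; auto.
  - f_equal. apply functional_extensionality; intro j. apply H; auto.
Qed.

Lemma bounded_rename L K K' rho (t : term L) :
  bounded_t K t -> (forall i, i < K -> rho i < K') -> bounded_t K' (rename rho t).
Proof.
  induction t; simpl; intros; auto.
Qed.

Definition targ {L} (t1 t2 : term L) : Fin.t 2 -> term L :=
  fun i => match i with Fin.F1 => t1 | _ => t2 end.

Lemma max2 {L} {M : structure L} (lin : strict_linear_order M) (b1 b2 : M) :
  exists b, (b1 = b \/ ltM b1 b) /\ (b2 = b \/ ltM b2 b).
Proof.
  destruct lin as [_ [_ tri]].
  destruct (tri b1 b2) as [H|[H|H]].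
  - exists b2; auto.
  - exists b2; auto.
  - exists b1; auto.
Qed.

Lemma lt_le {L} {M : structure L} (lin : strict_linear_order M) (x y z : M) :
  ltM x y -> (y = z \/ ltM y z) -> ltM x z.
Proof.
  destruct lin as [_ [tr _]]. intros H [<-|H']; eauto.
Qed.

Lemma le_lt {L} {M : structure L} (lin : strict_linear_order M) (x y z : M) :
  (x = y \/ ltM x y) -> ltM y z -> ltM x z.
Proof.
  destruct lin as [_ [tr _]]. intros [->|H'] H; eauto.
Qed.

Lemma fin_bound {L} {M : structure L} (lin : strict_linear_order M) (L0 : list M) :
  forall m (F : list M -> M -> Prop),
  (forall c, length c = m -> exists b, forall y, F c y -> ltM y b) ->
  exists b, forall c, length c = m -> (forall z, In z c -> In z L0) ->
    forall y, F c y -> ltM y b.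
Proof.
  induction m as [|m IH]; intros F HF.
  - destruct (HF nil eq_refl) as [b Hb]. exists b.
    intros c Hc _ y Hy. destruct c; [|discriminate]. auto.
  - assert (Hin : forall L1 : list M, exists b, forall z, In z L1 ->
      forall c', length c' = m -> (forall w, In w c' -> In w L0) ->
      forall y, F (z :: c') y -> ltM y b).
    { induction L1 as [|z L1 IHL].
      - exists (dom_inh M). intros z [].
      - destruct IHL as [b1 Hb1].
        destruct (IH (fun c' y => F (z :: c') y)) as [b2 Hb2].
        { intros c' Hc'. apply HF. simpl; auto. }
        destruct (max2 lin b1 b2) as [b [Hb1' Hb2']]. exists b.
        intros z' [<-|Hz'] c' Hc' Hsub y Hy.
        + eapply lt_le; eauto.
        + eapply lt_le; eauto. }
    destruct (Hin L0) as [b Hb]. exists b.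
    intros c Hc Hsub y Hy. destruct c as [|z c']; [discriminate|].
    eapply Hb; eauto.
    + apply Hsub; simpl; auto.
    + intros w Hw; apply Hsub; simpl; auto.
Qed.

Lemma unbounded_ext L (M : structure L) m : forall (P Q : list M -> Prop),
  (forall xs, P xs -> Q xs) -> unbounded m P -> unbounded m Q.
Proof.
  induction m; simpl; intros P Q H HP; auto.
  intros a. destruct (HP a) as [x [Hx Hu]]. exists x. split; auto.
  eapply IHm; [|exact Hu]. simpl; auto.
Qed.

Lemma mono (idx : nat -> nat) k : (forall j, j < k -> idx j < idx (S j)) ->
  forall j, j < k -> idx j < idx k.
Proof.
  induction k; intros H j Hj; [lia|].
  destruct (Nat.eq_dec j k) as [->|Hne]; [apply H; lia|].
  assert (idx j < idx k) by (apply IHk; [intros; apply H; lia | lia]).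
  specialize (H k ltac:(lia)). lia.
Qed.

Lemma game {L} {M : structure L} (lin : strict_linear_order M) (P : list M -> Prop)
  ku l (tau : term L) (a : M)
  (Hbeta : forall pre : list M, exists b, forall c, length c = ku ->
     (forall z, In z c -> In z pre) -> forall ss, length ss = l -> all_lt ss a ->
     ltM (eval_t (envl (c ++ ss)) tau) b) :
  forall m pre, unbounded m (fun xs => P (pre ++ xs)) -> B_tau M ku l tau a pre ->
  unbounded m (fun xs => P (pre ++ xs) /\ B_tau M ku l tau a (pre ++ xs)).
Proof.
  induction m as [|m IH]; intros pre HU HB; simpl in *.
  - rewrite app_nil_r in *. auto.
  - intros al. destruct (Hbeta pre) as [be Hbe].
    destruct (max2 lin al be) as [g [Hg1 Hg2]].
    destruct (HU g) as [x [Hx HUx]]. exists x. split.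
    { eapply le_lt; eauto. }
    assert (HB' : B_tau M ku l tau a (pre ++ [x])).
    { intros idx Hmono Hk ss Hss Hall.
      rewrite length_app in Hk; simpl in Hk.
      assert (Hm := mono idx ku Hmono).
      destruct (Nat.eq_dec (idx ku) (length pre)) as [Heq|Hne].
      - rewrite Heq. rewrite nth_middle.
        eapply (proj1 (proj2 lin)); [|exact Hx].
        eapply lt_le; [exact lin| |exact Hg2].
        apply Hbe; auto.
        + rewrite length_map, length_seq; auto.
        + intros z Hz. apply in_map_iff in Hz. destruct Hz as [j [<- Hj]].
          apply in_seq in Hj. specialize (Hm j ltac:(lia)).
          rewrite app_nth1 by lia. apply nth_In. lia.
      - assert (Hlt : idx ku < length pre) by lia.
        rewrite app_nth1 by lia.
        rewrite (map_ext_in _ (fun j => nth (idx j) pre (dom_inh M))).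
        + apply HB; auto.
        + intros j Hj. apply in_seq in Hj. specialize (Hm j ltac:(lia)).
          rewrite app_nth1 by lia. auto. }
    specialize (IH (pre ++ [x])).
    eapply unbounded_ext; [|apply IH; auto].
    + intros xs H. cbv beta in *. rewrite <- app_assoc in H. exact H.
    + eapply unbounded_ext; [|exact HUx]. intros xs H. cbv beta in *. rewrite <- app_assoc. exact H.
Qed.

Theorem lemma2p4 (L : signature) (T : theory L)
  (HL : countable_sig L) (HT : is_theory T) (Hcompl : complete T)
  (Hsk : has_skolem T) (Hlin : lt_linear T) (Hreg : regularity T)
  (M : structure L) (HM : models M T)
  (n k : nat) (phi : formula L) (Hphi : bounded_f (n + k) phi)
  (b : list M) (Hb : length b = k)
  (Hunb : unbounded n (fun xs => sat M (envl (xs ++ b)) phi))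
  (ku l : nat) (tau : term L) (Htau : bounded_t (ku + l) tau) (Hku : ku < n)
  (a : M) :
  unbounded n (fun xs => sat M (envl (xs ++ b)) phi /\ B_tau M ku l tau a xs).
Proof.
  pose proof (Hlin M HM) as lin.
  destruct n as [|n']; [lia|].
  assert (nomax : forall al : M, exists x, ltM al x).
  { intro al; destruct (Hunb al) as [x [Hx _]]; eauto. }
  assert (BND : forall c : list M, length c = ku -> exists be, forall y,
     (exists ss, length ss = l /\ all_lt ss a /\ y = eval_t (envl (c ++ ss)) tau) ->
     ltM y be).
  { intros c Hc. apply NNPP; intro Hno.
    set (rho := fun i => if i <? ku then S (l + i) else S (i - ku)).
    set (tau' := rename rho tau).
    set (phi' := f_not (f_rel (ltsym L) (targ tau' (var 0)))).
    assert (Hev : forall x ss, length ss = l ->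
      eval_t (envl (x :: ss ++ c)) tau' = eval_t (envl (c ++ ss)) tau).
    { intros x ss Hl. unfold tau'. rewrite eval_rename.
      apply (eval_ext _ _ (ku + l)); auto.
      intros i Hi. unfold envl, rho.
      destruct (Nat.ltb_spec i ku).
      - simpl. rewrite app_nth2 by lia. rewrite app_nth1 by lia.
        f_equal. lia.
      - simpl. rewrite app_nth1 by lia. rewrite app_nth2 by lia.
        f_equal. lia. }
    assert (Hsat : forall x ss, length ss = l ->
      (sat M (envl (x :: ss ++ c)) phi' <-> ~ ltM (eval_t (envl (c ++ ss)) tau) x)).
    { intros x ss Hl. unfold phi'. simpl. unfold ltM.
      replace (fun j => eval_t (envl (x :: ss ++ c)) (targ tau' (var 0) j))
        with (vec2 M (eval_t (envl (c ++ ss)) tau) x).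
      - tauto.
      - apply functional_extensionality; intro j.
        apply (Fin.caseS' j).
        + simpl. symmetry. apply Hev; auto.
        + intro p. reflexivity. }
    assert (Hbd : bounded_f (1 + l + ku) phi').
    { unfold phi'. simpl. intro j. apply (Fin.caseS' j).
      - simpl. unfold tau'. apply (bounded_rename _ (ku + l)); auto.
        intros i Hi. unfold rho. destruct (Nat.ltb_spec i ku); lia.
      - intro p. simpl. lia. }
    destruct (Hreg 1 l ku phi' Hbd M HM a c Hc) as [ys [Hys [Hall Hu]]].
    - simpl. intro al. destruct (nomax al) as [x Hx]. exists x; split; auto.
      apply NNPP; intro H'. apply Hno. exists x.
      intros y [ss [Hl [Ha Hy]]]. subst y. apply NNPP; intro Hn.
      apply H'. exists ss. repeat split; auto. apply Hsat; auto.
    - simpl in Hu. destruct (Hu (eval_t (envl (c ++ ys)) tau)) as [x [Hx Hs]].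
      apply (Hsat x ys Hys) in Hs. contradiction. }
  assert (Hbeta : forall pre : list M, exists be, forall c, length c = ku ->
     (forall z, In z c -> In z pre) -> forall ss, length ss = l -> all_lt ss a ->
     ltM (eval_t (envl (c ++ ss)) tau) be).
  { intro pre. destruct (fin_bound lin pre ku _ BND) as [be Hbe].
    exists be. intros c Hc Hsub ss Hss Hall. eapply Hbe; eauto. }
  refine (game lin (fun xs => sat M (envl (xs ++ b)) phi) ku l tau a Hbeta (S n') nil Hunb _).
  intros idx _ Hk. simpl in Hk. lia.
Qed.
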